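(* Let $\mathcal G$ be an ultragraph (with no sinks) and $X$ its ultragraph shift space. Then $X$ contains a closed, shift invariant ($\sigma(Y)\subseteq Y$), uncountable and irreducible subset $Y$ if and only if $\mathcal G$ has a vertex $v$ with $\#CP_{\mathcal G}(v)\ge2$.
   Context: An ultragraph $\mathcal G=(G^0,\mathcal G^1,r,s)$ consists of countable sets $G^0$ (vertices) and $\mathcal G^1$ (edges), a map $s:\mathcal G^1\to G^0$ and a map $r:\mathcal G^1\to P(G^0)\setminus\{\emptyset\}$. Standing assumption: $\mathcal G$ has no sinks, i.e. $s^{-1}(v)\neq\emptyset$ for every $v\in G^0$. $\mathcal G^0$ is the smallest subset of $P(G^0)$ containing $\{v\}$ for all $v\in G^0$ and $r(e)$ for all $e\in\mathcal G^1$, and closed under finite unions and nonempty finite intersections. A finite path is either an element of $\mathcal G^0$ (length $0$) or a sequence of edges $e_1\dots e_k$ with $s(e_{i+1})\in r(e_i)$ (length $k$); an infinite path is a sequence $e_1e_2\dots$ of edges with $s(e_{i+1})\in r(e_i)$ for all $i$, and $\mathfrak p^\infty$ is the set of infinite paths. The set of ultrapaths $\mathfrak p$ consists of all $A\in\mathcal G^0$ (length $0$) and all pairs $(\alpha,A)$ with $\alpha=e_1\dots e_k$ a finite path, $k\ge1$, $A\in\mathcal G^0$, $A\subseteq r(e_k)$ (length $k$). A set $A\in\mathcal G^0$ is an infinite emitter if $\{e\in\mathcal G^1:s(e)\in A\}$ is infinite, and a minimal infinite emitter if moreover no proper subset of $A$ belonging to $\mathcal G^0$ is an infinite emitter. The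 ultragraph shift space is $X=\mathfrak p^\infty\cup X_{fin}$, where $X_{fin}$ consists of all $(\alpha,A)\in\mathfrak p$ with $|\alpha|\ge1$ and $A$ a minimal infinite emitter contained in $r(\alpha)$, together with all minimal infinite emitters $A\in\mathcal G^0$. An ultrapath $p$ is an initial segment of $x\in X$ when: if $p=A\in\mathcal G^0$, then either $x$ has length $\ge1$ and its first edge has source in $A$, or $x=B\in\mathcal G^0$ with $B\subseteq A$; if $p=(\alpha,A)$ with $|\alpha|\ge1$, then the first $|\alpha|$ edges of $x$ form $\alpha$ and either $x$ has length $>|\alpha|$ and its $(|\alpha|+1)$-th edge has source in $A$, or $x=(\alpha,B)$ with $B\subseteq A$. Fix an enumeration $\mathfrak p=\{p_1,p_2,\dots\}$; the metric on $X$ is $d(x,x)=0$ and, for $x\neq y$, $d(x,y)=2^{-i}$ where $i$ is the least index such that $p_i$ is an initial segment of exactly one of $x,y$ (the topology does not depend on the enumeration). The shift map $\sigma:X\to X$ is $\sigma(\gamma_1\gamma_2\dots)=\gamma_2\gamma_3\dots$, $\sigma((\gamma_1\dots\gamma_n,A))=(\gamma_2\dots\gamma_n,A)$ if $n>1$, $\sigma((\gamma_1,A))=A$, $\sigma(A)=A$. For a closed shift invariant $Y\subseteq X$ and $n\ge1$, $B_n(Y)$ is the set of finite paths $w$ of length $n$ such that $w\gamma\in Y$ for some infinite path $\gamma$, and $B(Y)=\bigcup_n B_n(Y)$; $Y$ is irreducible if for all $u,w\in B(Y)$ there is $z\in B(Y)$ with $uzw\in B(Y)$. A closed path based at the vertex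 $v$ is a finite path $e_1e_2\dots e_k$ ($k\ge1$) with $v=s(e_1)\in r(e_k)$ and $s(e_i)\neq v$ for all $1<i\le k$; $CP_{\mathcal G}(v)$ denotes the set of closed paths based at $v$. *)

(* Defs.v *)
From Stdlib Require Import List Arith.
Import ListNotations.
Set Implicit Arguments.

(* An ultragraph is given by vertex type V, edge type E, source map
   s : E -> V and range map r : E -> (V -> Prop) (subsets of V as predicates). *)
Section Ultragraph.
Variables (V E : Type) (s : E -> V) (r : E -> V -> Prop).

Definition subset (A B : V -> Prop) : Prop := forall v, A v -> B v.

Definition countable_type (T : Type) : Prop :=
  exists f : T -> nat, forall x y, f x = f y -> x = y.

(* G^0: the smallest family of subsets of G^0 containing all singletons {v},
   all ranges r(e), closed under (nonempty) finite unions and nonempty finite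
   intersections (equivalently, binary ones). *)
Definition Gen0 (A : V -> Prop) : Prop :=
  forall F : (V -> Prop) -> Prop,
    (forall v, F (fun w => w = v)) ->
    (forall e, F (r e)) ->
    (forall B C, F B -> F C -> F (fun w => B w \/ C w)) ->
    (forall B C, F B -> F C -> F (fun w => B w /\ C w)) ->
    F A.

Fixpoint path_cond (l : list E) : Prop :=
  match l with
  | [] => True
  | e :: l' =>
      match l' with
      | [] => True
      | e' :: _ => r e (s e') /\ path_cond l'
      end
  end.

Definition is_path (l : list E) : Prop := l <> [] /\ path_cond l.

Definition is_infpath (f : nat -> E) : Prop := forall i, r (f i) (s (f (S i))).

Definition last_range (alpha : list E) : V -> Prop :=
  match rev alpha with
  | [] => fun _ => False
  | e :: _ => r e
  end.

(* Ultrapaths: pairs (alpha, A); alpha = [] encodes the length-0 ultrapath A. *)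
Definition is_ultrapath (p : list E * (V -> Prop)) : Prop :=
  let (alpha, A) := p in
  match alpha with
  | [] => Gen0 A
  | _ => is_path alpha /\ Gen0 A /\ subset A (last_range alpha)
  end.

Definition finite_edges (P : E -> Prop) : Prop :=
  exists l : list E, forall e, P e -> In e l.

Definition infinite_emitter (A : V -> Prop) : Prop :=
  Gen0 A /\ ~ finite_edges (fun e => A (s e)).

Definition min_inf_emitter (A : V -> Prop) : Prop :=
  infinite_emitter A /\
  forall B, Gen0 B -> subset B A -> ~ subset A B -> ~ infinite_emitter B.

(* Points of the candidate space: infinite sequences of edges, or pairs
   (alpha, A) with alpha a finite list of edges (alpha = [] encodes A). *)
Inductive xpt : Type :=
| Inf : (nat -> E) -> xpt
| Fin : list E -> (V -> Prop) -> xpt.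

Definition inX (x : xpt) : Prop :=
  match x with
  | Inf f => is_infpath f
  | Fin alpha A =>
      match alpha with
      | [] => min_inf_emitter A
      | _ => is_path alpha /\ min_inf_emitter A /\ subset A (last_range alpha)
      end
  end.

Definition shift (x : xpt) : xpt :=
  match x with
  | Inf f => Inf (fun n => f (S n))
  | Fin [] A => Fin [] A
  | Fin (_ :: alpha) A => Fin alpha A
  end.

Definition initial_segment (p : list E * (V -> Prop)) (x : xpt) : Prop :=
  let (alpha, A) := p in
  match x with
  | Inf f =>
      (forall i, i < length alpha -> Some (f i) = nth_error alpha i)
      /\ A (s (f (length alpha)))
  | Fin beta B =>
      (exists e gamma, beta = alpha ++ e :: gamma /\ A (s e))
      \/ (beta = alpha /\ subset B A)
  end.

Definition ultrapath_enumeration (p : nat -> list E * (V -> Prop)) : Prop :=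
  (forall n, is_ultrapath (p n)) /\
  (forall q, is_ultrapath q -> exists n, p n = q) /\
  (forall n m, p n = p m -> n = m).

(* With d(x,y) = 2^{-(i+1)} for i the least index with p_i an initial segment
   of exactly one of x, y (indices shifted to start at 0), and d(x,x) = 0:
   d(x,y) < 2^{-(k+1)}  <->  p_0, ..., p_k are initial segments of x iff of y. *)
Definition agree_upto (p : nat -> list E * (V -> Prop)) (k : nat) (x y : xpt) : Prop :=
  forall i, i <= k -> (initial_segment (p i) x <-> initial_segment (p i) y).

Definition closed_in_X (p : nat -> list E * (V -> Prop)) (Y : xpt -> Prop) : Prop :=
  forall x, inX x ->
    (forall k, exists y, Y y /\ agree_upto p k x y) -> Y x.

Definition shift_invariant (Y : xpt -> Prop) : Prop :=
  forall y, Y y -> Y (shift y).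

Definition uncountable_set (Y : xpt -> Prop) : Prop :=
  ~ exists f : xpt -> nat, forall x y, Y x -> Y y -> f x = f y -> x = y.

Definition concat_inf (w : list E) (g : nat -> E) : nat -> E :=
  fun i => if i <? length w then nth i w (g 0) else g (i - length w).

Definition in_lang (Y : xpt -> Prop) (w : list E) : Prop :=
  is_path w /\ exists g, is_infpath g /\ Y (Inf (concat_inf w g)).

Definition irreducible (Y : xpt -> Prop) : Prop :=
  forall u w, in_lang Y u -> in_lang Y w ->
    exists z, in_lang Y z /\ in_lang Y (u ++ z ++ w).

Definition closed_path (v : V) (c : list E) : Prop :=
  is_path c /\
  (exists e1 rest, c = e1 :: rest /\ s e1 = v /\ Forall (fun e => s e <> v) rest) /\
  last_range c v.

End Ultragraph.

(* Main.v *)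
Require Import Defs.
From Stdlib Require Import List Arith Lia Classical ClassicalEpsilon FunctionalExtensionality.
Import ListNotations.

Section Tool.
Variables (V E : Type) (s : E -> V) (r : E -> V -> Prop).

Lemma pc_app a y b : path_cond s r (a ++ y :: b) <->
  path_cond s r a /\ path_cond s r (y :: b) /\ (a <> [] -> r (last a y) (s y)).
Proof.
  induction a as [|x a IH].
  - simpl. split; [intros H; repeat split; auto; intros C; congruence | tauto].
  - destruct a as [|x' a].
    + simpl. split.
      * intros [H1 H2]. repeat split; auto.
      * intros [_ [H2 H3]]. split; auto. apply H3. discriminate.
    + change ((x :: x' :: a) ++ y :: b) with (x :: ((x' :: a) ++ y :: b)).
      change (path_cond s r (x :: ((x' :: a) ++ y :: b))) with
        (r x (s x') /\ path_cond s r ((x' :: a) ++ y :: b)).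
      change (path_cond s r (x :: x' :: a)) with (r x (s x') /\ path_cond s r (x' :: a)).
      change (last (x :: x' :: a) y) with (last (x' :: a) y).
      rewrite IH. split.
      * intros [H1 [H2 [H3 H4]]]. repeat split; auto. intros _. apply H4. discriminate.
      * intros [[H1 H2] [H3 H4]]. repeat split; auto. intros _. apply H4. discriminate.
Qed.

Lemma pc_app_r a b : path_cond s r (a ++ b) -> path_cond s r b.
Proof. destruct b as [|y b]. simpl; auto. intros H; apply pc_app in H; tauto. Qed.

Lemma last_range_last a x : a <> [] -> last_range r a = r (last a x).
Proof.
  intros H. unfold last_range. rewrite (app_removelast_last x H) at 1.
  rewrite rev_app_distr. reflexivity.
Qed.

Lemma pc_nth l d i : path_cond s r l -> S i < length l -> r (nth i l d) (s (nth (S i) l d)).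
Proof.
  revert i. induction l as [|x l IH]; intros i H Hi; simpl in Hi. lia.
  destruct l as [|y l]. simpl in Hi; lia.
  destruct H as [H1 H2]. destruct i. exact H1.
  apply (IH i H2). simpl in *; lia.
Qed.

Lemma pc_of_nth l d : (forall i, S i < length l -> r (nth i l d) (s (nth (S i) l d))) -> path_cond s r l.
Proof.
  induction l as [|x l IH]; intros H. exact I.
  destruct l as [|y l]. exact I.
  split. apply (H 0). simpl; lia.
  apply IH. intros i Hi. apply (H (S i)). simpl in *; lia.
Qed.

Lemma nth_map_seq (f : nat -> E) n i d : i < n -> nth i (map f (seq 0 n)) d = f i.
Proof.
  intros H. rewrite (nth_indep _ _ (f 0)) by (rewrite length_map, length_seq; lia).
  rewrite map_nth, seq_nth by lia. reflexivity.
Qed.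

Lemma pc_map_seq f n : is_infpath s r f -> path_cond s r (map f (seq 0 n)).
Proof.
  intros Hf. apply (pc_of_nth _ (f 0)). intros i Hi.
  rewrite length_map, length_seq in Hi.
  rewrite !nth_map_seq by lia. apply Hf.
Qed.

Lemma split_first (P : E -> Prop) (t : list E) :
  Forall (fun e => ~ P e) t \/
  exists t1 x t2, t = t1 ++ x :: t2 /\ Forall (fun e => ~ P e) t1 /\ P x.
Proof.
  induction t as [|a t IH]. left; constructor.
  destruct (classic (P a)) as [Ha|Ha].
  - right. exists [], a, t. auto.
  - destruct IH as [IH|(t1&x&t2&->&H1&H2)].
    + left. constructor; auto.
    + right. exists (a :: t1), x, t2. repeat split; auto.
Qed.

Lemma periodic (v : V)
  (HU : forall c1 c2, closed_path s r v c1 -> closed_path s r v c2 -> c1 = c2) :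
  forall n l e, length l <= n -> path_cond s r (l ++ [e]) -> s e = v ->
  (forall x t, l = x :: t -> s x = v) -> l <> [] ->
  (exists c, closed_path s r v c) /\
  forall c d, closed_path s r v c -> forall i, i < length l ->
     nth i l d = nth (i mod length c) c d.
Proof.
  induction n as [|n IH]; intros l e Hl Hp He Hh Hne.
  { destruct l; simpl in Hl; [congruence|lia]. }
  destruct l as [|e1 t]; [congruence|].
  pose proof (Hh e1 t eq_refl) as He1.
  destruct (split_first (fun x => s x = v) t) as [HF|(t1&x&t2&->&HF&Hx)].
  - assert (Hc : closed_path s r v (e1 :: t)).
    { apply pc_app in Hp. destruct Hp as (H1&_&H3).
      split; [split; [discriminate|exact H1]|]. split.
      + exists e1, t. auto.
      + rewrite (last_range_last _ e) by discriminate. rewrite <- He. apply H3. discriminate. }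
    split. eauto.
    intros c d Hcc i Hi. rewrite (HU _ _ Hcc Hc). rewrite Nat.mod_small by exact Hi. reflexivity.
  - assert (Heq : (e1 :: t1 ++ x :: t2) ++ [e] = (e1 :: t1) ++ x :: (t2 ++ [e])).
    { simpl. rewrite <- app_assoc. reflexivity. }
    rewrite Heq in Hp. apply pc_app in Hp. destruct Hp as (H1&H2&H3).
    assert (Hc : closed_path s r v (e1 :: t1)).
    { split; [split; [discriminate|exact H1]|]. split.
      + exists e1, t1. auto.
      + rewrite (last_range_last _ x) by discriminate. rewrite <- Hx. apply H3. discriminate. }
    assert (Hl' : length (x :: t2) <= n).
    { simpl in *. rewrite length_app in Hl. simpl in Hl. lia. }
    destruct (IH (x :: t2) e Hl' H2 He ltac:(intros ? ? [= <- <-]; exact Hx) ltac:(discriminate))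
      as [_ IH2].
    split. eauto.
    intros c d Hcc i Hi. rewrite (HU _ _ Hcc Hc).
    change (e1 :: t1 ++ x :: t2) with ((e1 :: t1) ++ x :: t2).
    destruct (Nat.lt_ge_cases i (length (e1 :: t1))) as [Hlt|Hge].
    + rewrite app_nth1 by exact Hlt. rewrite Nat.mod_small by exact Hlt. reflexivity.
    + rewrite app_nth2 by exact Hge.
      rewrite (IH2 (e1 :: t1) d Hc).
      * replace i with ((i - length (e1 :: t1)) + 1 * length (e1 :: t1)) at 2 by lia.
        rewrite Nat.Div0.mod_add. reflexivity.
      * simpl in Hi |- *. rewrite length_app in Hi. simpl in Hi. lia.
Qed.


Lemma ultra_of_inX a A : inX s r (Fin a A) -> is_ultrapath s r (a, A).
Proof. destruct a; simpl; unfold min_inf_emitter, infinite_emitter; tauto. Qed.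

Lemma concat_prefix (f : nat -> E) n : concat_inf (map f (seq 0 n)) (fun k => f (n + k)) = f.
Proof.
  apply functional_extensionality. intros k. unfold concat_inf. rewrite length_map, length_seq.
  destruct (k <? n) eqn:H.
  - apply Nat.ltb_lt in H. apply nth_map_seq; auto.
  - apply Nat.ltb_ge in H. f_equal. lia.
Qed.

Lemma prefix_inlang (Y : xpt V E -> Prop) f n :
  is_infpath s r f -> Y (Inf V f) -> in_lang s r Y (map f (seq 0 (S n))).
Proof.
  intros Hf HY. split.
  - split. simpl; discriminate. apply pc_map_seq; auto.
  - exists (fun k => f (S n + k)). split.
    + intros i. simpl. replace (n + S i) with (S (n + i)) by lia. apply Hf.
    + rewrite concat_prefix. exact HY.
Qed.

Lemma inf_periodic (Y : xpt V E -> Prop) (HX : forall y, Y y -> inX s r y)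
  (Hirr : irreducible s r Y)
  (HU : forall v c1 c2, closed_path s r v c1 -> closed_path s r v c2 -> c1 = c2)
  f : Y (Inf V f) ->
  (exists c, closed_path s r (s (f 0)) c) /\
  forall c, closed_path s r (s (f 0)) c -> forall i, f i = nth (i mod length c) c (f 0).
Proof.
  intros HY. assert (Hf : is_infpath s r f) by exact (HX _ HY).
  assert (key : forall i, exists l, path_cond s r (l ++ [f 0]) /\ l <> [] /\
     (forall x t, l = x :: t -> s x = s (f 0)) /\ i < length l /\ nth i l (f 0) = f i).
  { intros i.
    destruct (Hirr _ _ (prefix_inlang Y f i Hf HY) (prefix_inlang Y f 0 Hf HY))
      as [z [_ [[_ Hp] _]]].
    change (map f (seq 0 1)) with [f 0] in Hp. rewrite app_assoc in Hp.
    exists (map f (seq 0 (S i)) ++ z). split; [exact Hp|]. split; [simpl; discriminate|].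
    split; [intros x t H; simpl in H; injection H as <- _; reflexivity|].
    split; [rewrite length_app, length_map, length_seq; lia|].
    rewrite app_nth1 by (rewrite length_map, length_seq; lia). apply nth_map_seq; lia. }
  destruct (key 0) as (l&Hp&Hne&Hh&_&_).
  destruct (periodic (s (f 0)) (HU _) (length l) l (f 0) (le_n _) Hp eq_refl Hh Hne)
    as [Hex _].
  split; [exact Hex|].
  intros c Hc i. destruct (key i) as (l'&Hp'&Hne'&Hh'&Hi'&Hn').
  destruct (periodic (s (f 0)) (HU _) (length l') l' (f 0) (le_n _) Hp' eq_refl Hh' Hne')
    as [_ H]. rewrite <- Hn'. apply H; auto.
Qed.

Lemma forward (HV : countable_type V) (p : nat -> list E * (V -> Prop))
  (Hp : ultrapath_enumeration s r p) (Y : xpt V E -> Prop)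
  (HX : forall y, Y y -> inX s r y) (Hunc : uncountable_set Y) (Hirr : irreducible s r Y) :
  exists v c1 c2, closed_path s r v c1 /\ closed_path s r v c2 /\ c1 <> c2.
Proof.
  apply NNPP. intros Hn.
  assert (HU : forall v c1 c2, closed_path s r v c1 -> closed_path s r v c2 -> c1 = c2).
  { intros v c1 c2 H1 H2. apply NNPP. intros H. apply Hn. exists v, c1, c2. auto. }
  destruct HV as [hV HhV].
  apply Hunc.
  exists (fun x => match x with Inf _ f => 2 * hV (s (f 0))
          | Fin a A => S (2 * epsilon (inhabits 0) (fun n => p n = (a, A))) end).
  intros x y Hx Hy Heq.
  destruct x as [f|a A]; destruct y as [g|b B].
  - assert (Hv : s (f 0) = s (g 0)) by (apply HhV; lia).
    destruct (inf_periodic Y HX Hirr HU f Hx) as [[c Hc] Pf].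
    destruct (inf_periodic Y HX Hirr HU g Hy) as [_ Pg].
    assert (Hc' : closed_path s r (s (g 0)) c) by (rewrite <- Hv; exact Hc).
    f_equal. apply functional_extensionality. intros i.
    rewrite (Pg c Hc' i). rewrite (Pf c Hc i). apply nth_indep.
    apply Nat.mod_upper_bound. destruct Hc as [[Hne _] _]. destruct c; simpl; [congruence|lia].
  - lia.
  - lia.
  - assert (E1 := epsilon_spec (inhabits 0) (fun n => p n = (a, A))
                    (proj1 (proj2 Hp) _ (ultra_of_inX a A (HX _ Hx)))).
    assert (E2 := epsilon_spec (inhabits 0) (fun n => p n = (b, B))
                    (proj1 (proj2 Hp) _ (ultra_of_inX b B (HX _ Hy)))).
    cbv beta in E1, E2.
    assert (Heq' : epsilon (inhabits 0) (fun n => p n = (a, A)) =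
                   epsilon (inhabits 0) (fun n => p n = (b, B))) by lia.
    rewrite Heq' in E1. rewrite E1 in E2. injection E2 as -> ->. reflexivity.
Qed.


Lemma gen0_single (w : V) : Gen0 r (fun x => x = w).
Proof. intros F H1 _ _ _. apply H1. Qed.
Lemma gen0_range e : Gen0 r (r e).
Proof. intros F _ H2 _ _. apply H2. Qed.

Lemma ultra_gen l A : l <> [] -> path_cond s r l -> Gen0 r A -> subset A (last_range r l) ->
  is_ultrapath s r (l, A).
Proof. destruct l; [congruence|]. intros. simpl. repeat split; auto. Qed.

Lemma last_indep (l : list E) x y : l <> [] -> last l x = last l y.
Proof. induction l as [|a l IH]; intros H; [congruence|]. destruct l; simpl; auto. apply IH; discriminate. Qed.

Lemma cantor : ~ exists G : (nat -> bool) -> nat, forall b b', G b = G b' -> b = b'.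
Proof.
  intros [G HG].
  set (H := fun n => epsilon (inhabits (fun _ : nat => true)) (fun b => G b = n)).
  set (D := fun k => negb (H k k)).
  assert (HD : G (H (G D)) = G D)
    by (exact (epsilon_spec _ (fun b => G b = G D) (ex_intro _ D eq_refl))).
  apply HG in HD. assert (X := f_equal (fun h => h (G D)) HD). cbv beta in X.
  change (D (G D)) with (negb (H (G D) (G D))) in X.
  destruct (H (G D) (G D)); discriminate.
Qed.

Variables (v : V) (c1 c2 : list E) (d : E).
Hypotheses (Hc1 : closed_path s r v c1) (Hc2 : closed_path s r v c2) (Hneq : c1 <> c2).

Definition word (b : nat -> bool) k := if b k then c1 else c2.
Fixpoint catn b n := match n with 0 => [] | S n => catn b n ++ word b n end.
Definition conc b i := nth i (catn b (S i)) d.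

Lemma word_closed b k : closed_path s r v (word b k).
Proof. unfold word; destruct (b k); auto. Qed.

Lemma closed_len c : closed_path s r v c -> 1 <= length c.
Proof. intros (_&(e1&rest&->&_)&_). simpl; lia. Qed.
Lemma closed_head c : closed_path s r v c -> s (nth 0 c d) = v.
Proof. intros (_&(e1&rest&->&H&_)&_). exact H. Qed.
Lemma closed_inner c i : closed_path s r v c -> 1 <= i < length c -> s (nth i c d) <> v.
Proof.
  intros (_&(e1&rest&->&_&HF)&_) Hi. destruct i; [lia|]. simpl in *.
  rewrite Forall_forall in HF. apply HF. apply nth_In. lia.
Qed.
Lemma closed_last c : closed_path s r v c -> r (last c d) v.
Proof.
  intros (Hp&_&Hl). rewrite (last_range_last _ d) in Hl by (destruct Hp; auto). exact Hl.
Qed.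

Lemma catn_len b n : n <= length (catn b n).
Proof.
  induction n; simpl; [lia|]. rewrite length_app. pose proof (closed_len _ (word_closed b n)). lia.
Qed.

Lemma catn_prefix b m n : m <= n -> exists t, catn b n = catn b m ++ t.
Proof.
  induction n; intros H.
  - assert (m = 0) by lia. subst. exists []. reflexivity.
  - destruct (Nat.eq_dec m (S n)) as [->|Hn].
    + exists []. rewrite app_nil_r. reflexivity.
    + destruct (IHn ltac:(lia)) as [t Ht]. exists (t ++ word b n). simpl. rewrite Ht, app_assoc. reflexivity.
Qed.

Lemma conc_nth b n i : i < length (catn b n) -> conc b i = nth i (catn b n) d.
Proof.
  intros Hi. unfold conc.
  destruct (catn_prefix b (S i) (max (S i) n)) as [t1 H1]; [lia|].
  destruct (catn_prefix b n (max (S i) n)) as [t2 H2]; [lia|].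
  pose proof (catn_len b (S i)).
  rewrite <- (app_nth1 _ t1) by lia. rewrite <- H1, H2. apply app_nth1. exact Hi.
Qed.

Lemma conc_word b m i : i < length (word b m) -> conc b (length (catn b m) + i) = nth i (word b m) d.
Proof.
  intros Hi. rewrite (conc_nth b (S m)) by (simpl; rewrite length_app; lia). simpl.
  rewrite app_nth2 by lia. f_equal; lia.
Qed.

Lemma last_app_ne (a b : list E) x : b <> [] -> last (a ++ b) x = last b x.
Proof.
  induction a as [|y a IH]; intros H; simpl; auto.
  destruct (a ++ b) eqn:Eq.
  - apply app_eq_nil in Eq. tauto.
  - rewrite <- IH by auto. reflexivity.
Qed.

Lemma catn_pc b n : path_cond s r (catn b n) /\ (catn b n <> [] -> r (last (catn b n) d) v).
Proof.
  induction n as [|n [IH1 IH2]]; simpl.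
  - split; [exact I|congruence].
  - pose proof (word_closed b n) as Hw.
    pose proof (closed_last _ Hw) as Hl.
    destruct Hw as ([_ Hp]&(e1&rest&Heq&Hs&_)&_).
    rewrite Heq in *. split.
    + apply pc_app. split; auto. split; auto. intros Hne.
      rewrite (last_indep _ e1 d) by auto. rewrite Hs. auto.
    + intros _. rewrite last_app_ne by discriminate. exact Hl.
Qed.

Lemma conc_infpath b : is_infpath s r (conc b).
Proof.
  intros i. pose proof (catn_len b (S (S i))).
  rewrite (conc_nth b (S (S i)) i), (conc_nth b (S (S i)) (S i)) by lia.
  apply pc_nth. apply catn_pc. lia.
Qed.

Lemma in_catn b n x : In x (catn b n) -> In x (c1 ++ c2).
Proof.
  induction n; simpl; [tauto|]. rewrite in_app_iff. intros [H|H]; auto.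
  apply in_app_iff. unfold word in H. destruct (b n); auto.
Qed.

Lemma conc_in b i : In (conc b i) (c1 ++ c2).
Proof. unfold conc. apply (in_catn b (S i)). apply nth_In. pose proof (catn_len b (S i)). lia. Qed.

Lemma catn_agree b b' m : (forall k, k < m -> b k = b' k) -> catn b m = catn b' m.
Proof.
  induction m; intros H; simpl; auto. rewrite IHm by (intros; apply H; lia).
  unfold word; rewrite H by lia. reflexivity.
Qed.

Lemma decode b b' : conc b = conc b' -> b = b'.
Proof.
  intros H.
  assert (step : forall m, (forall k, k < m -> b k = b' k) -> b m = b' m).
  { intros m Hm. pose proof (catn_agree b b' m Hm) as Hcat.
    destruct (Bool.bool_dec (b m) (b' m)) as [ok|Hd]; auto. exfalso.
    assert (Hcc : word b m <> word b' m).
    { unfold word. destruct (b m), (b' m); try congruence; auto. }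
    set (P := length (catn b m)).
    assert (F1 : forall i, i < length (word b m) -> conc b (P + i) = nth i (word b m) d)
      by (intros; apply conc_word; auto).
    assert (F1' : forall i, i < length (word b' m) -> conc b' (P + i) = nth i (word b' m) d)
      by (intros; unfold P; rewrite Hcat; apply conc_word; auto).
    assert (F2 : s (conc b (P + length (word b m))) = v).
    { replace (P + length (word b m)) with (length (catn b (S m)) + 0)
        by (unfold P; simpl; rewrite length_app; lia).
      rewrite conc_word by (apply closed_len, word_closed).
      apply closed_head, word_closed. }
    assert (F2' : s (conc b' (P + length (word b' m))) = v).
    { replace (P + length (word b' m)) with (length (catn b' (S m)) + 0)
        by (unfold P; simpl; rewrite length_app, Hcat; lia).
      rewrite conc_word by (apply closed_len, word_closed).
      apply closed_head, word_closed. }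
    destruct (lt_eq_lt_dec (length (word b m)) (length (word b' m))) as [[Hlt|Heq]|Hlt].
    - rewrite H, F1' in F2 by auto. apply (closed_inner _ _ (word_closed b' m)) in F2; auto.
      split; auto. apply closed_len, word_closed.
    - apply Hcc. apply nth_ext with d d; auto. intros i Hi.
      rewrite <- F1, <- F1', H; auto. lia.
    - rewrite <- H, F1 in F2' by auto. apply (closed_inner _ _ (word_closed b m)) in F2'; auto.
      split; auto. apply closed_len, word_closed. }
  assert (all : forall m k, k < m -> b k = b' k).
  { induction m; intros k Hk; [lia|].
    destruct (Nat.eq_dec k m) as [->|]; [apply step; auto|apply IHm; lia]. }
  apply functional_extensionality. intros k. apply (all (S k)). lia.
Qed.

Definition Yset (x : xpt V E) : Prop :=
  match x with
  | Inf _ f => forall n, exists b j, forall i, i < n -> f i = conc b (j + i)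
  | Fin _ _ => False
  end.

Definition splice (b b' : nat -> bool) m := fun k => if k <? m then b k else b' (k - m).

Lemma catn_splice b b' m n : catn (splice b b' m) (m + n) = catn b m ++ catn b' n.
Proof.
  induction n.
  - rewrite Nat.add_0_r, app_nil_r. apply catn_agree. intros k Hk. unfold splice.
    rewrite (proj2 (Nat.ltb_lt _ _) Hk). reflexivity.
  - rewrite Nat.add_succ_r. simpl. rewrite IHn, <- app_assoc. do 2 f_equal.
    unfold word, splice. rewrite (proj2 (Nat.ltb_ge _ _)) by lia.
    replace (m + n - m) with n by lia. reflexivity.
Qed.

Lemma conc_splice1 b b' m i : i < length (catn b m) -> conc (splice b b' m) i = conc b i.
Proof.
  intros Hi. rewrite (conc_nth _ m), (conc_nth b m); auto.
  - f_equal. pose proof (catn_splice b b' m 0) as X. rewrite Nat.add_0_r, app_nil_r in X. rewrite X; auto.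
  - pose proof (catn_splice b b' m 0) as X. rewrite Nat.add_0_r, app_nil_r in X. rewrite X; auto.
Qed.

Lemma conc_splice2 b b' m i : conc (splice b b' m) (length (catn b m) + i) = conc b' i.
Proof.
  pose proof (catn_len b' (S i)).
  rewrite (conc_nth _ (m + S i)) by (rewrite catn_splice, length_app; lia).
  rewrite catn_splice. rewrite app_nth2 by lia. replace (length (catn b m) + i - length (catn b m)) with i by lia.
  symmetry. apply conc_nth. lia.
Qed.

Lemma inlang_occ w : in_lang s r Yset w -> exists b j, forall i, i < length w -> nth i w d = conc b (j+i).
Proof.
  intros [_ [g [_ HY]]]. destruct (HY (length w)) as (b&j&H). exists b, j. intros i Hi.
  rewrite <- H by auto. unfold concat_inf. rewrite (proj2 (Nat.ltb_lt _ _) Hi). apply nth_indep; auto.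
Qed.

Lemma occ_inlang w b j : w <> [] -> (forall i, i < length w -> nth i w d = conc b (j+i)) ->
  in_lang s r Yset w.
Proof.
  intros Hne H. split.
  - split; auto. apply (pc_of_nth _ d). intros i Hi. rewrite !H by lia.
    replace (j + S i) with (S (j+i)) by lia. apply conc_infpath.
  - exists (fun k => conc b (j + length w + k)). split.
    + intros i. replace (j + length w + S i) with (S (j + length w + i)) by lia. apply conc_infpath.
    + simpl. intros n. exists b, j. intros i _. unfold concat_inf. destruct (i <? length w) eqn:Ei.
      * apply Nat.ltb_lt in Ei. rewrite nth_indep with (d' := d) by exact Ei. apply H; auto.
      * apply Nat.ltb_ge in Ei. f_equal; lia.
Qed.

Lemma Y_irr : irreducible s r Yset.
Proof.
  intros u w Hu Hw.
  destruct (inlang_occ u Hu) as (b&j&Hub). destruct (inlang_occ w Hw) as (b'&j'&Hwb).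
  assert (Hune : u <> []) by (destruct Hu as [[? _] _]; auto).
  set (b'' := splice b b' (j + length u + 1)).
  set (P := length (catn b (j + length u + 1))).
  assert (HP : j + length u + 1 <= P) by apply catn_len.
  set (z := map (fun i => conc b'' (j + length u + i)) (seq 0 (P + j' - j - length u))).
  assert (Hz : length z = P + j' - j - length u) by (unfold z; rewrite length_map, length_seq; auto).
  exists z. split.
  - apply (occ_inlang z b'' (j + length u)).
    + intro Hc. rewrite Hc in Hz; simpl in Hz; lia.
    + intros i Hi. unfold z. rewrite nth_map_seq by lia. reflexivity.
  - apply (occ_inlang _ b'' j).
    + destruct u; [congruence|discriminate].
    + intros i Hi. rewrite !length_app in Hi.
      destruct (Nat.lt_ge_cases i (length u)).
      * rewrite app_nth1 by auto. rewrite Hub by auto. symmetry. apply conc_splice1. lia.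
      * rewrite app_nth2 by auto. destruct (Nat.lt_ge_cases (i - length u) (length z)).
        -- rewrite app_nth1 by auto. unfold z at 1. rewrite nth_map_seq by lia. f_equal. lia.
        -- rewrite app_nth2 by auto. rewrite Hwb by lia.
           replace (j + i) with (P + (j' + (i - length u - length z))) by lia.
           symmetry. apply conc_splice2.
Qed.

Lemma Y_inX y : Yset y -> inX s r y.
Proof.
  destruct y as [f|a A]; simpl; [|tauto]. intros H i.
  destruct (H (S (S i))) as (b&j&Hb). rewrite !Hb by lia.
  replace (j + S i) with (S (j+i)) by lia. apply conc_infpath.
Qed.

Lemma Y_shift : shift_invariant Yset.
Proof.
  intros [f|a A] H; simpl in *; [|contradiction]. intros n.
  destruct (H (S n)) as (b&j&Hb). exists b, (S j). intros i Hi. rewrite Hb by lia. f_equal; lia.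
Qed.

Lemma Y_unc : uncountable_set Yset.
Proof.
  intros [F HF]. apply cantor. exists (fun b => F (Inf V (conc b))). intros b b' H.
  apply decode. assert (X : Inf V (conc b) = Inf V (conc b')).
  { apply HF; auto; intros n; [exists b, 0|exists b', 0]; auto. }
  injection X; auto.
Qed.


Lemma Y_closed (p : nat -> list E * (V -> Prop)) (Hp : ultrapath_enumeration s r p) :
  closed_in_X s r p Yset.
Proof.
  intros x Hx Happ. destruct Hp as [_ [Hsurj _]].
  destruct x as [f|a A].
  - simpl in Hx. simpl. intros n.
    set (q := (map f (seq 0 n), fun w => w = s (f n))).
    assert (Hq : is_ultrapath s r q).
    { destruct n as [|n].
      - simpl. apply gen0_single.
      - apply ultra_gen. simpl; discriminate. apply pc_map_seq; auto. apply gen0_single.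
        intros w ->. rewrite (last_range_last _ (f 0)) by (simpl; discriminate).
        rewrite seq_S, map_app. change (map f [0 + n]) with [f (0 + n)].
        rewrite last_last. simpl. apply Hx. }
    destruct (Hsurj q Hq) as [k Hk].
    destruct (Happ k) as [y [Hy Hag]].
    assert (Hin : initial_segment s q (Inf V f)).
    { simpl. rewrite length_map, length_seq. split; [|reflexivity].
      intros i Hi. rewrite (nth_error_nth' _ (f 0)) by (rewrite length_map, length_seq; lia).
      rewrite nth_map_seq by lia. reflexivity. }
    rewrite <- Hk in Hin. apply (Hag k (le_n _)) in Hin. rewrite Hk in Hin.
    destruct y as [g|]; [|contradiction].
    simpl in Hin. destruct Hin as [Hin _]. rewrite length_map, length_seq in Hin.
    destruct (Hy n) as (b&j&Hb). exists b, j. intros i Hi. rewrite <- Hb by auto.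
    specialize (Hin i Hi).
    rewrite (nth_error_nth' _ (f 0)) in Hin by (rewrite length_map, length_seq; lia).
    rewrite nth_map_seq in Hin by lia. injection Hin; auto.
  - set (L := c1 ++ c2).
    set (idx := fun e => epsilon (inhabits 0) (fun n => p n = (a ++ [e], r e))).
    assert (HaA : is_ultrapath s r (a, A)) by (apply ultra_of_inX; exact Hx).
    destruct (Hsurj _ HaA) as [k0 Hk0].
    set (K := max k0 (list_max (map idx L))).
    destruct (Happ K) as [y [Hy Hag]].
    assert (H1 : initial_segment s (a, A) (Fin a A))
      by (simpl; right; split; [reflexivity| intros w Hw; exact Hw]).
    rewrite <- Hk0 in H1. apply (Hag k0 (Nat.le_max_l _ _)) in H1. rewrite Hk0 in H1.
    destruct y as [g|]; [|contradiction].
    simpl in H1. destruct H1 as [Hpre HA].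
    set (e := g (length a)).
    assert (HeL : In e L).
    { destruct (Hy (S (length a))) as (b&j&Hb). unfold e. rewrite Hb by lia. apply conc_in. }
    assert (Hge : is_infpath s r g) by exact (Y_inX _ Hy).
    assert (Hae : a ++ [e] = map g (seq 0 (S (length a)))).
    { apply nth_ext with d d.
      - rewrite length_app, length_map, length_seq. simpl. lia.
      - intros i Hi. rewrite length_app in Hi; simpl in Hi.
        rewrite nth_map_seq by lia.
        destruct (Nat.lt_ge_cases i (length a)) as [Hl|Hl].
        + rewrite app_nth1 by auto. specialize (Hpre i Hl).
          rewrite (nth_error_nth' _ d) in Hpre by auto. injection Hpre; auto.
        + rewrite app_nth2 by auto. replace i with (length a) by lia.
          rewrite Nat.sub_diag. reflexivity. }
    assert (Hq : is_ultrapath s r (a ++ [e], r e)).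
    { apply ultra_gen.
      - intro X. apply app_eq_nil in X. destruct X; discriminate.
      - rewrite Hae; apply pc_map_seq; auto.
      - apply gen0_range.
      - rewrite (last_range_last _ e) by (intro X; apply app_eq_nil in X; destruct X; discriminate).
        rewrite last_last. intros w Hw; exact Hw. }
    assert (Hidx : p (idx e) = (a ++ [e], r e))
      by (exact (epsilon_spec (inhabits 0) (fun n => p n = (a ++ [e], r e)) (Hsurj _ Hq))).
    assert (HiK : idx e <= K).
    { unfold K. assert (idx e <= list_max (map idx L)); [|lia].
      assert (Hm := proj1 (list_max_le (map idx L) _) (le_n _)).
      rewrite Forall_forall in Hm. apply Hm. apply in_map. exact HeL. }
    assert (Hseg : initial_segment s (a ++ [e], r e) (Inf V g)).
    { simpl. split.
      - intros i Hi. rewrite Hae. rewrite (nth_error_nth' _ d)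
          by (rewrite length_map, length_seq; rewrite length_app in Hi; simpl in Hi; lia).
        rewrite nth_map_seq by (rewrite length_app in Hi; simpl in Hi; lia). reflexivity.
      - rewrite length_app. simpl. unfold e. replace (length a + 1) with (S (length a)) by lia.
        apply Hge. }
    rewrite <- Hidx in Hseg. apply (proj2 (Hag _ HiK)) in Hseg. rewrite Hidx in Hseg.
    simpl in Hseg.
    destruct Hseg as [(e'&gamma&Heq&_)|[Heq _]]; apply (f_equal (@length E)) in Heq;
      rewrite !length_app in Heq; simpl in Heq; lia.
Qed.

End Tool.

Theorem proposition3p9 (V E : Type) (s : E -> V) (r : E -> V -> Prop)
  (HV : countable_type V) (HE : countable_type E)
  (Hr : forall e, exists v, r e v)
  (Hnosink : forall v, exists e, s e = v)
  (p : nat -> list E * (V -> Prop))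
  (Hp : ultrapath_enumeration s r p) :
  (exists Y : xpt V E -> Prop,
      (forall y, Y y -> inX s r y) /\
      closed_in_X s r p Y /\ shift_invariant Y /\ uncountable_set Y /\
      irreducible s r Y)
  <->
  (exists v c1 c2, closed_path s r v c1 /\ closed_path s r v c2 /\ c1 <> c2).
Proof.
  split.
  - intros (Y & HX & _ & _ & Hunc & Hirr). exact (forward V E s r HV p Hp Y HX Hunc Hirr).
  - intros (v & c1 & c2 & H1 & H2 & Hne).
    assert (Hd : exists d : E, True).
    { destruct H1 as [_ [[d _] _]]. exists d; auto. }
    destruct Hd as [d _].
    exists (Yset V E c1 c2 d). split; [|split; [|split; [|split]]].
    + exact (Y_inX V E s r v c1 c2 d H1 H2).
    + exact (Y_closed V E s r v c1 c2 d H1 H2 p Hp).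
    + exact (Y_shift V E c1 c2 d).
    + exact (Y_unc V E s r v c1 c2 d H1 H2 Hne).
    + exact (Y_irr V E s r v c1 c2 d H1 H2).
Qed.
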